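(* Let $S=\{0,1,2,\dots\}$, let $\lambda,\mu>0$, and let $Q=\{q(i,j):i,j\in S\}$ be given by $q(i,i+1)=\lambda$; $q(i,i+k)=0$ for $k\ge 2$; $q(i,i-k)=\mu$ for $i\ge 1$ and $k=1,\dots,i$; $q(i,j)=0$ for $j<0$ (i.e. no jumps below $0$); and $q(i,i)=-(\lambda+i\mu)$. Let $\Pi=\{\pi(i,j)\}$ be the associated jump matrix: $c(i)=\lambda+i\mu$, $\pi(i,j)=q(i,j)/c(i)$ for $i\neq j$, $\pi(i,i)=0$. Then any discrete-time Markov chain on $S$ with initial distribution a strictly positive probability measure $\tau$ on $S$ and transition probabilities $\pi(i,j)$ is irreducible and recurrent. Consequently, the minimal nonnegative solution $p^*_t(x,y)$ of the Kolmogorov backward equations $$\frac{d}{dt}p_t(x,y)=\sum_{z\in S}q(x,z)p_t(z,y)\ (t>0,\ x,y\in S),\qquad p_0(x,y)=\delta_{xy},$$ is stochastic, i.e. $\sum_{y\in S}p^*_t(x,y)=1$ for all $x\in S$, $t\ge 0$.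
   Context: The minimal solution of the backward equations is the standard one associated with a conservative rate matrix $Q$ (nonnegative off-diagonal entries, rows summing to $0$); it is known to satisfy the Chapman–Kolmogorov equations and all transition-function properties except possibly $\sum_y p_t(x,y)=1$. *)

(* Defs.v *)
From Stdlib Require Import Reals Arith.
From Coquelicot Require Import Coquelicot.
Open Scope R_scope.

Definition qmat (lam mu : R) (i j : nat) : R :=
  if Nat.eqb j (S i) then lam
  else if Nat.ltb j i then mu
  else if Nat.eqb j i then - (lam + INR i * mu)
  else 0.

Definition crate (lam mu : R) (i : nat) : R := lam + INR i * mu.

Definition jump_matrix (q : nat -> nat -> R) (c : nat -> R) (i j : nat) : R :=
  if Nat.eqb i j then 0 else q i j / c i.

Fixpoint nstep (P : nat -> nat -> R) (n : nat) (i j : nat) : R :=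
  match n with
  | O => if Nat.eqb i j then 1 else 0
  | S m => Series (fun k => P i k * nstep P m k j)
  end.

(* First-passage probabilities: fpass P n i j = P_i(first visit to j at time n), n >= 1. *)
Fixpoint fpass (P : nat -> nat -> R) (n : nat) (i j : nat) : R :=
  match n with
  | O => 0
  | S O => P i j
  | S m => Series (fun k => if Nat.eqb k j then 0 else P i k * fpass P m k j)
  end.

Definition irreducible (P : nat -> nat -> R) : Prop :=
  forall i j : nat, exists n : nat, 0 < nstep P n i j.

Definition recurrent_state (P : nat -> nat -> R) (i : nat) : Prop :=
  is_series (fun n => fpass P (S n) i i) 1.

Definition recurrent (P : nat -> nat -> R) : Prop :=
  forall i : nat, recurrent_state P i.

Definition backward_solution (q : nat -> nat -> R) (p : R -> nat -> nat -> R) : Prop :=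
  (forall t x y, 0 <= t -> 0 <= p t x y) /\
  (forall x y, p 0 x y = if Nat.eqb x y then 1 else 0) /\
  (forall x y, forall eps, 0 < eps -> exists delta, 0 < delta /\
       forall s, 0 <= s < delta -> Rabs (p s x y - p 0 x y) < eps) /\
  (forall t x y, 0 < t ->
       ex_series (fun z => q x z * p t z y) /\
       is_derive (fun s => p s x y) t (Series (fun z => q x z * p t z y))).

Definition minimal_backward_solution (q : nat -> nat -> R) (p : R -> nat -> nat -> R) : Prop :=
  backward_solution q p /\
  forall p', backward_solution q p' ->
    forall t x y, 0 <= t -> p t x y <= p' t x y.

(* Main.v *)
Require Import Defs.
From Stdlib Require Import Reals Arith Lia Lra Classical.
From Coquelicot Require Import Coquelicot.
Open Scope R_scope.

Fixpoint psum (f : nat -> R) (n : nat) : R :=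
  match n with O => 0 | S m => psum f m + f m end.

Lemma psum_ext f g n : (forall l, (l < n)%nat -> f l = g l) -> psum f n = psum g n.
Proof. induction n; simpl; intros H; [reflexivity|]. rewrite IHn by (intros; apply H; lia). rewrite H by lia. reflexivity. Qed.

Lemma psum_plus f g n : psum (fun l => f l + g l) n = psum f n + psum g n.
Proof. induction n; simpl; [lra|]. rewrite IHn. lra. Qed.

Lemma psum_minus f g n : psum (fun l => f l - g l) n = psum f n - psum g n.
Proof. induction n; simpl; [lra|]. rewrite IHn. lra. Qed.

Lemma psum_scal c f n : psum (fun l => c * f l) n = c * psum f n.
Proof. induction n; simpl; [lra|]. rewrite IHn. lra. Qed.

Lemma psum_const c n : psum (fun _ => c) n = INR n * c.
Proof. induction n; simpl psum; [simpl; lra|]. rewrite IHn, S_INR. lra. Qed.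

Lemma psum_le f g n : (forall l, (l < n)%nat -> f l <= g l) -> psum f n <= psum g n.
Proof. induction n; simpl; intros H; [lra|]. assert (f n <= g n) by (apply H; lia).
  assert (psum f n <= psum g n) by (apply IHn; intros; apply H; lia). lra. Qed.

Lemma psum_nonneg f n : (forall l, (l < n)%nat -> 0 <= f l) -> 0 <= psum f n.
Proof. induction n; simpl; intros H; [lra|]. assert (0 <= f n) by (apply H; lia).
  assert (0 <= psum f n) by (apply IHn; intros; apply H; lia). lra. Qed.

Lemma psum_ge_term f n k : (forall l, (l < n)%nat -> 0 <= f l) -> (k < n)%nat -> f k <= psum f n.
Proof. induction n; intros H Hk; [lia|]. simpl.
  destruct (Nat.eq_dec k n) as [->|Hne].
  - assert (0 <= psum f n) by (apply psum_nonneg; intros; apply H; lia). lra.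
  - assert (f k <= psum f n) by (apply IHn; [intros; apply H; lia| lia]).
    assert (0 <= f n) by (apply H; lia). lra. Qed.

Lemma psum_shift f n : psum f (S n) = f O + psum (fun l => f (S l)) n.
Proof. induction n; simpl in *; [lra|]. rewrite IHn. lra. Qed.

Lemma psum_stable f n m : (forall l, (n <= l)%nat -> f l = 0) -> (n <= m)%nat -> psum f m = psum f n.
Proof. intros H Hm. induction Hm; [reflexivity|]. simpl. rewrite IHHm, H by lia. lra. Qed.

Lemma sum_n_psum a N : sum_n a N = psum a (S N).
Proof. rewrite sum_n_Reals. induction N; simpl in *; [lra|]. rewrite IHN. reflexivity. Qed.

Lemma is_series_fin f n : (forall l, (n <= l)%nat -> f l = 0) -> is_series f (psum f n).
Proof. intros H. apply is_series_Reals. intros eps Heps. exists n. intros m Hm.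
  rewrite <- sum_n_Reals, sum_n_psum. rewrite (psum_stable f n (S m)) by (auto; lia).
  unfold R_dist. rewrite Rminus_diag, Rabs_R0. exact Heps. Qed.

Lemma Series_fin f n : (forall l, (n <= l)%nat -> f l = 0) -> Series f = psum f n.
Proof. intros H. apply is_series_unique. apply is_series_fin. exact H. Qed.

Lemma ex_series_fin f n : (forall l, (n <= l)%nat -> f l = 0) -> ex_series f.
Proof. intros H. eexists. apply is_series_fin with (n := n). exact H. Qed.

Lemma psum_swap (g : nat -> nat -> R) N n :
  psum (fun i => psum (fun l => g i l) n) N = psum (fun l => psum (fun i => g i l) N) n.
Proof. induction N; simpl.
  - induction n; simpl; [reflexivity|]. rewrite <- IHn. lra.
  - rewrite IHN. rewrite <- psum_plus. reflexivity. Qed.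

Lemma psum_split f n : psum f (S (S n)) = psum f n + f n + f (S n).
Proof. reflexivity. Qed.

Section B.
Variables (lam mu : R) (Hlam : 0 < lam) (Hmu : 0 < mu).

Definition PP := jump_matrix (qmat lam mu) (crate lam mu).
Notation c := (crate lam mu).

Lemma crate_pos k : 0 < c k.
Proof. unfold crate. assert (0 <= INR k) by apply pos_INR. nra. Qed.

Lemma q_up k : qmat lam mu k (S k) = lam.
Proof. unfold qmat. rewrite Nat.eqb_refl. reflexivity. Qed.
Lemma q_down k l : (l < k)%nat -> qmat lam mu k l = mu.
Proof. intros H. unfold qmat. destruct (Nat.eqb_spec l (S k)); [lia|].
  destruct (Nat.ltb_spec l k); [reflexivity|lia]. Qed.
Lemma q_diag k : qmat lam mu k k = - c k.
Proof. unfold qmat, crate. destruct (Nat.eqb_spec k (S k)); [lia|].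
  destruct (Nat.ltb_spec k k); [lia|]. rewrite Nat.eqb_refl. reflexivity. Qed.
Lemma q_zero k l : (S (S k) <= l)%nat -> qmat lam mu k l = 0.
Proof. intros H. unfold qmat. destruct (Nat.eqb_spec l (S k)); [lia|].
  destruct (Nat.ltb_spec l k); [lia|]. destruct (Nat.eqb_spec l k); [lia|]. reflexivity. Qed.

Lemma P_up k : PP k (S k) = lam / c k.
Proof. unfold PP, jump_matrix. destruct (Nat.eqb_spec k (S k)); [lia|]. rewrite q_up. reflexivity. Qed.
Lemma P_down k l : (l < k)%nat -> PP k l = mu / c k.
Proof. intros H. unfold PP, jump_matrix. destruct (Nat.eqb_spec k l); [lia|]. rewrite q_down by lia. reflexivity. Qed.
Lemma P_diag k : PP k k = 0.
Proof. unfold PP, jump_matrix. rewrite Nat.eqb_refl. reflexivity. Qed.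
Lemma P_zero k l : (S (S k) <= l)%nat -> PP k l = 0.
Proof. intros H. unfold PP, jump_matrix. destruct (Nat.eqb_spec k l); [lia|]. rewrite q_zero by lia. unfold Rdiv. ring. Qed.
Lemma P_nonneg k l : 0 <= PP k l.
Proof. pose proof (crate_pos k) as Hc.
  destruct (lt_eq_lt_dec l k) as [[H|H]|H].
  - rewrite P_down by lia. apply Rlt_le, Rdiv_lt_0_compat; lra.
  - subst. rewrite P_diag. lra.
  - destruct (Nat.eq_dec l (S k)) as [->|Hn].
    + rewrite P_up. apply Rlt_le, Rdiv_lt_0_compat; lra.
    + rewrite P_zero by lia. lra. Qed.

Lemma P_row_fin k W : Series (fun l => PP k l * W l) = psum (fun l => PP k l * W l) (S (S k)).
Proof. apply Series_fin. intros l Hl. rewrite P_zero by lia. ring. Qed.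
Lemma P_row_ex k W : ex_series (fun l => PP k l * W l).
Proof. apply ex_series_fin with (n := S (S k)). intros l Hl. rewrite P_zero by lia. ring. Qed.

Lemma P_row k W : Series (fun l => PP k l * W l) = (mu * psum W k + lam * W (S k)) / c k.
Proof. pose proof (crate_pos k). rewrite P_row_fin, psum_split, P_diag, P_up.
  rewrite (psum_ext _ (fun l => mu / c k * W l)) by (intros; rewrite P_down by lia; reflexivity).
  rewrite psum_scal. field. lra. Qed.

Lemma P_rowsum k : Series (fun l => PP k l * 1) = 1.
Proof. pose proof (crate_pos k). rewrite P_row, psum_const. unfold crate in *. field. lra. Qed.

Lemma q_row_fin x W : Series (fun z => qmat lam mu x z * W z) = psum (fun z => qmat lam mu x z * W z) (S (S x)).
Proof. apply Series_fin. intros l Hl. rewrite q_zero by lia. ring. Qed.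
Lemma q_row_ex x W : ex_series (fun z => qmat lam mu x z * W z).
Proof. apply ex_series_fin with (n := S (S x)). intros l Hl. rewrite q_zero by lia. ring. Qed.
Lemma q_row x W : Series (fun z => qmat lam mu x z * W z) = lam * W (S x) + mu * psum W x - c x * W x.
Proof. rewrite q_row_fin, psum_split, q_diag, q_up.
  rewrite (psum_ext _ (fun l => mu * W l)) by (intros; rewrite q_down by lia; reflexivity).
  rewrite psum_scal. ring. Qed.

End B.

Section C.
Variables (lam mu : R) (Hlam : 0 < lam) (Hmu : 0 < mu).
Notation P := (PP lam mu).
Notation c := (crate lam mu).

Lemma nstep_nonneg n i j : 0 <= nstep P n i j.
Proof. revert i j. induction n; intros i j; simpl.
  - destruct (i =? j)%nat; lra.
  - rewrite P_row_fin. apply psum_nonneg. intros. apply Rmult_le_pos; [apply P_nonneg; assumption|apply IHn]. Qed.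

Lemma nstep_ge m i j k : P i k * nstep P m k j <= nstep P (S m) i j.
Proof. simpl. rewrite P_row_fin.
  destruct (le_lt_dec (S (S i)) k) as [H|H].
  - rewrite P_zero by (assumption || lia). rewrite Rmult_0_l. apply psum_nonneg.
    intros. apply Rmult_le_pos; [apply P_nonneg; assumption|apply nstep_nonneg].
  - apply psum_ge_term with (f := fun l => P i l * nstep P m l j); [|exact H].
    intros. apply Rmult_le_pos; [apply P_nonneg; assumption|apply nstep_nonneg]. Qed.

Lemma climb d i : 0 < nstep P d i (i + d).
Proof. revert i. induction d; intros i.
  - simpl. rewrite Nat.add_0_r, Nat.eqb_refl. lra.
  - eapply Rlt_le_trans; [|apply (nstep_ge d i (i + S d) (S i))].
    rewrite P_up by assumption. replace (i + S d)%nat with (S i + d)%nat by lia.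
    apply Rmult_lt_0_compat; [|apply IHd]. apply Rdiv_lt_0_compat; [lra|apply crate_pos; assumption]. Qed.

Lemma irred : irreducible P.
Proof. intros i j. destruct (le_lt_dec i j) as [H|H].
  - exists (j - i)%nat. replace j with (i + (j - i))%nat at 2 by lia. apply climb.
  - exists 1%nat. eapply Rlt_le_trans; [|apply (nstep_ge 0 i j j)].
    simpl. rewrite Nat.eqb_refl, Rmult_1_r. rewrite P_down by assumption.
    apply Rdiv_lt_0_compat; [lra|apply crate_pos; assumption]. Qed.

Section Rec.
Variable j : nat.
Definition cut (G : nat -> R) l := if (l =? j)%nat then 0 else G l.

Fixpoint hh n k := match n with O => 1 | S n => Series (fun l => if (l =? j)%nat then 0 else P k l * hh n l) end.

Lemma ser_cut k G : Series (fun l => if (l =? j)%nat then 0 else P k l * G l) = Series (fun l => P k l * cut G l).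
Proof. apply Series_ext. intros l. unfold cut. destruct (l =? j)%nat; ring. Qed.

Lemma row_mono k G1 G2 : (forall l, G1 l <= G2 l) -> Series (fun l => P k l * G1 l) <= Series (fun l => P k l * G2 l).
Proof. intros H. rewrite !P_row_fin. apply psum_le. intros l _. apply Rmult_le_compat_l; [apply P_nonneg; assumption|apply H]. Qed.

Lemma row_nonneg k G : (forall l, 0 <= G l) -> 0 <= Series (fun l => P k l * G l).
Proof. intros H. rewrite P_row_fin. apply psum_nonneg. intros. apply Rmult_le_pos; [apply P_nonneg; assumption|apply H]. Qed.

Lemma hh_nonneg n k : 0 <= hh n k.
Proof. revert k; induction n; intros k; simpl; [lra|]. rewrite ser_cut. apply row_nonneg.
  intros l; unfold cut; destruct (l =? j)%nat; [lra|apply IHn]. Qed.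

Lemma cut_mono G1 G2 : (forall l, G1 l <= G2 l) -> forall l, cut G1 l <= cut G2 l.
Proof. intros H l; unfold cut; destruct (l =? j)%nat; [lra|apply H]. Qed.

Lemma hh_step n k : hh (S n) k <= hh n k.
Proof. revert k; induction n; intros k.
  - pose proof (P_rowsum lam mu Hlam Hmu k) as HR. simpl hh. rewrite ser_cut.
    eapply Rle_trans; [|right; exact HR]. apply row_mono.
    intros l. unfold cut. destruct (l =? j)%nat; lra.
  - change (hh (S (S n)) k) with (Series (fun l => if (l =? j)%nat then 0 else P k l * hh (S n) l)).
    change (hh (S n) k) with (Series (fun l => if (l =? j)%nat then 0 else P k l * hh n l)).
    rewrite !ser_cut. apply row_mono. apply cut_mono. exact IHn. Qed.

Lemma hh_anti n m k : (n <= m)%nat -> hh m k <= hh n k.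
Proof. intros H; induction H; [lra|]. pose proof (hh_step m k). lra. Qed.

Lemma row_psum k (G : nat -> nat -> R) N :
  psum (fun n => Series (fun l => P k l * G n l)) N = Series (fun l => P k l * psum (fun n => G n l) N).
Proof. rewrite P_row_fin. rewrite (psum_ext (fun n => Series _) (fun n => psum (fun l => P k l * G n l) (S (S k))))
  by (intros; apply P_row_fin). rewrite psum_swap. apply psum_ext. intros. rewrite psum_scal. reflexivity. Qed.

Lemma psum_cut (G : nat -> nat -> R) N l : psum (fun n => cut (G n) l) N = cut (fun l => psum (fun n => G n l) N) l.
Proof. unfold cut. destruct (l =? j)%nat; [|reflexivity]. induction N; simpl; [reflexivity|]. rewrite IHN; ring. Qed.

Lemma psum_cut_split (f G : nat -> R) n :
  psum (fun l => f l * G l) n = psum (fun l => f l * cut G l) n + (if (j <? n)%nat then f j * G j else 0).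
Proof. induction n; simpl; [ring|]. rewrite IHn. unfold cut.
  destruct (Nat.eqb_spec n j) as [->|Hne].
  - destruct (Nat.ltb_spec j j); [lia|]. destruct (Nat.ltb_spec j (S j)); [ring|lia].
  - destruct (Nat.ltb_spec j n); destruct (Nat.ltb_spec j (S n)); try lia; ring. Qed.

Lemma row_cut_split k G : Series (fun l => P k l * G l) = Series (fun l => P k l * cut G l) + P k j * G j.
Proof. rewrite !P_row_fin. rewrite psum_cut_split. destruct (Nat.ltb_spec j (S (S k))); [reflexivity|].
  rewrite P_zero by (assumption || lia). ring. Qed.

Definition FF N k := psum (fun n => fpass P (S n) k j) N.

Lemma fpass_SS n k : fpass P (S (S n)) k j = Series (fun l => if (l =? j)%nat then 0 else P k l * fpass P (S n) l j).
Proof. reflexivity. Qed.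

Lemma FF_hh N k : FF N k + hh N k = 1.
Proof. revert k; induction N; intros k; [simpl; unfold FF; simpl; ring|].
  unfold FF. rewrite psum_shift.
  rewrite (psum_ext _ (fun n => Series (fun l => P k l * cut (fun l => fpass P (S n) l j) l)))
    by (intros; rewrite fpass_SS, ser_cut; reflexivity).
  rewrite row_psum. simpl hh. rewrite ser_cut.
  transitivity (P k j + Series (fun l => P k l * cut (fun _ => 1) l)).
  - change (fpass P 1 k j) with (P k j). rewrite !P_row_fin. rewrite Rplus_assoc. f_equal.
    rewrite <- psum_plus. apply psum_ext. intros l _. rewrite psum_cut. unfold cut.
    destruct (l =? j)%nat; [ring|]. rewrite <- Rmult_plus_distr_l. f_equal. rewrite <- (IHN l). unfold FF. reflexivity.
  - pose proof (P_rowsum lam mu Hlam Hmu k) as HR. rewrite (row_cut_split k (fun _ => 1)) in HR. lra. Qed.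

Variable V : nat -> R.
Hypothesis V_nonneg : forall k, 0 <= V k.
Hypothesis V_lyap : forall k, 1 + Series (fun l => P k l * cut V l) <= V k.

Lemma hh_sum_le N k : psum (fun n => hh n k) N <= V k.
Proof. revert k; induction N; intros k; [simpl; apply V_nonneg|].
  rewrite psum_shift. simpl hh at 1.
  rewrite (psum_ext _ (fun n => Series (fun l => P k l * cut (hh n) l))) by (intros; simpl; apply ser_cut).
  rewrite row_psum. eapply Rle_trans; [|apply V_lyap]. apply Rplus_le_compat_l. apply row_mono.
  intros l. rewrite psum_cut. apply cut_mono. intros. apply IHN. Qed.

Lemma hh_bound N k : INR N * hh N k <= V k.
Proof. eapply Rle_trans; [|apply (hh_sum_le N k)]. rewrite <- psum_const. apply psum_le.
  intros. apply hh_anti. lia. Qed.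

Lemma rec_j : is_series (fun n => fpass P (S n) j j) 1.
Proof. apply is_series_Reals. intros eps Heps.
  destruct (INR_unbounded (V j / eps)) as [N HN]. exists N. intros n Hn.
  rewrite <- sum_n_Reals, sum_n_psum. fold (FF (S n) j).
  pose proof (FF_hh (S n) j). pose proof (hh_nonneg (S n) j). pose proof (hh_bound (S n) j).
  unfold R_dist. replace (FF (S n) j - 1) with (- hh (S n) j) by lra. rewrite Rabs_Ropp, Rabs_right by lra.
  assert (INR N <= INR n) by (apply le_INR; lia). rewrite S_INR in *.
  assert (0 < INR n + 1) by (pose proof (pos_INR n); lra).
  assert (V j < eps * (INR n + 1)). { apply Rmult_lt_reg_r with (/ eps).
    apply Rinv_0_lt_compat; lra. replace (eps * (INR n + 1) * / eps) with (INR n + 1) by (field; lra). unfold Rdiv in HN. lra. }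
  nra. Qed.

End Rec.
End C.

Section D.
Variables (lam mu : R) (Hlam : 0 < lam) (Hmu : 0 < mu).
Notation P := (PP lam mu).
Notation c := (crate lam mu).

Fixpoint Ssum k := match k with O => 0 | S k => Ssum k + INR (S k) * ((c k + mu * Ssum k) / lam) end.
Definition dd k := (c k + mu * Ssum k) / lam.
Definition DD k := psum dd k.

Lemma Ssum_nonneg k : 0 <= Ssum k.
Proof. induction k; [simpl; lra|]. change (Ssum (S k)) with (Ssum k + INR (S k) * ((c k + mu * Ssum k) / lam)). pose proof (crate_pos lam mu Hlam Hmu k).
  assert (0 <= (c k + mu * Ssum k) / lam) by (apply Rdiv_le_0_compat; nra).
  pose proof (pos_INR (S k)). pose proof (Rmult_le_pos _ _ H1 H0). lra. Qed.

Lemma dd_nonneg k : 0 <= dd k.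
Proof. unfold dd. pose proof (crate_pos lam mu Hlam Hmu k). pose proof (Ssum_nonneg k).
  apply Rdiv_le_0_compat; nra. Qed.

Lemma DD_nonneg k : 0 <= DD k.
Proof. apply psum_nonneg. intros; apply dd_nonneg. Qed.

Lemma DD_mono l k : (l <= k)%nat -> DD l <= DD k.
Proof. intros H; induction H; [lra|]. unfold DD in *; simpl. pose proof (dd_nonneg m). lra. Qed.

Lemma Ssum_eq k : Ssum k = INR k * DD k - psum DD k.
Proof. induction k; [simpl; ring|]. change (Ssum (S k)) with (Ssum k + INR (S k) * dd k).
  unfold DD at 1. simpl psum. fold (DD k). rewrite IHk. rewrite S_INR. ring. Qed.

Lemma psum_INR k : psum INR k = INR k * (INR k - 1) / 2.
Proof. induction k; [simpl; field|]. simpl psum. rewrite IHk, S_INR. field. Qed.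

Lemma psum_drop (f W : nat -> R) a j k : (forall l, f l <= W l) -> f j <= W j - a -> (j < k)%nat ->
  psum f k <= psum W k - a.
Proof. intros H1 H2 H3. induction k; [lia|]. simpl.
  destruct (Nat.eq_dec j k) as [->|Hne].
  - assert (psum f k <= psum W k) by (apply psum_le; auto). lra.
  - assert (psum f k <= psum W k - a) by (apply IHk; lia). pose proof (H1 k). lra. Qed.

Section J.
Variable j : nat.
Definition GG := DD j.
Definition AA := 3 * lam / mu + GG.
Definition VV l := if (l <? j)%nat then GG - DD l else if (l =? j)%nat then 1 + AA + 2 * (INR j + 1) else AA + 2 * INR l.

Lemma AA_ge : GG <= AA /\ 3 * lam <= mu * AA.
Proof. unfold AA. split.
  - assert (0 < 3 * lam / mu) by (apply Rdiv_lt_0_compat; lra). lra.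
  - pose proof (DD_nonneg j). unfold GG. replace (mu * (3 * lam / mu + DD j)) with (3 * lam + mu * DD j) by (field; lra). nra. Qed.

Lemma VV_nonneg k : 0 <= VV k.
Proof. pose proof AA_ge. pose proof (DD_nonneg j). unfold VV, GG in *. pose proof (pos_INR k). pose proof (pos_INR j).
  destruct (Nat.ltb_spec k j). - pose proof (DD_mono k j ltac:(lia)). lra.
  - destruct (k =? j)%nat; lra. Qed.

Lemma VV_lyap k : 1 + Series (fun l => P k l * cut j VV l) <= VV k.
Proof. rewrite P_row by assumption. pose proof (crate_pos lam mu Hlam Hmu k) as Hc.
  pose proof AA_ge as [HA1 HA2]. pose proof (DD_nonneg j) as HG. fold GG in HG.
  destruct (lt_eq_lt_dec k j) as [[Hk|Hk]|Hk].
  -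
    rewrite (psum_ext _ (fun l => GG - DD l)).
    2:{ intros l Hl. unfold cut, VV. destruct (Nat.eqb_spec l j); [lia|]. destruct (Nat.ltb_spec l j); [reflexivity|lia]. }
    assert (Hs : cut j VV (S k) = GG - DD k - dd k).
    { unfold cut, VV. change (DD (S k)) with (DD k + dd k) in *.
      destruct (Nat.eqb_spec (S k) j) as [He|He].
      - unfold GG. rewrite <- He. change (DD (S k)) with (DD k + dd k). ring.
      - destruct (Nat.ltb_spec (S k) j); [|lia]. change (DD (S k)) with (DD k + dd k). ring. }
    rewrite Hs. unfold VV. destruct (Nat.ltb_spec k j); [|lia].
    rewrite psum_minus, psum_const. unfold dd. rewrite Ssum_eq.
    right. unfold crate in *. field. lra.
  - subst k.
    assert (Hp : psum (cut j VV) j <= INR j * GG).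
    { rewrite <- psum_const. apply psum_le. intros l Hl. unfold cut, VV.
      destruct (Nat.eqb_spec l j); [lia|]. destruct (Nat.ltb_spec l j); [|lia]. pose proof (DD_nonneg l). lra. }
    assert (Hs : cut j VV (S j) = AA + 2 * (INR j + 1)).
    { unfold cut, VV. destruct (Nat.eqb_spec (S j) j); [lia|]. destruct (Nat.ltb_spec (S j) j); [lia|].
      destruct (Nat.eqb_spec (S j) j); [lia|]. rewrite S_INR. ring. }
    rewrite Hs. unfold VV at 2. rewrite Nat.ltb_irrefl, Nat.eqb_refl.
    set (M := AA + 2 * (INR j + 1)) in *. pose proof (pos_INR j).
    assert (GG <= M) by (unfold M; lra).
    assert (mu * psum (cut j VV) j + lam * M <= c j * M).
    { unfold crate. assert (mu * psum (cut j VV) j <= mu * (INR j * M)).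
      { apply Rmult_le_compat_l; [lra|]. nra. } nra. }
    assert ((mu * psum (cut j VV) j + lam * M) / c j <= M).
    { apply Rmult_le_reg_r with (c j); [lra|]. unfold Rdiv. rewrite Rmult_assoc, Rinv_l by lra. lra. }
    unfold M in *. lra.
  -
    assert (Hp : psum (cut j VV) k <= psum (fun l => AA + 2 * INR l) k - AA).
    { apply psum_drop with (j := j); [| |exact Hk].
      - intros l. unfold cut, VV. pose proof (pos_INR l). destruct (Nat.eqb_spec l j); [lra|].
        destruct (Nat.ltb_spec l j); [pose proof (DD_nonneg l); lra|]. destruct (Nat.eqb_spec l j); [lia|lra].
      - unfold cut. rewrite Nat.eqb_refl. pose proof (pos_INR j). lra. }
    rewrite psum_plus, psum_const, psum_scal, psum_INR in Hp.
    assert (Hs : cut j VV (S k) = AA + 2 * (INR k + 1)).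
    { unfold cut, VV. destruct (Nat.eqb_spec (S k) j); [lia|]. destruct (Nat.ltb_spec (S k) j); [lia|].
      destruct (Nat.eqb_spec (S k) j); [lia|]. rewrite S_INR. ring. }
    rewrite Hs. unfold VV at 2. destruct (Nat.ltb_spec k j); [lia|]. destruct (Nat.eqb_spec k j); [lia|].
    set (S0 := psum (cut j VV) k) in *. set (K := INR k) in *.
    assert (HK : 1 <= K) by (unfold K; apply (le_INR 1); lia).
    assert (Hmain : c k + mu * S0 + lam * (AA + 2 * (K + 1)) <= (AA + 2 * K) * c k).
    { unfold crate. fold K. assert (mu * S0 <= mu * (K * AA + 2 * (K * (K - 1) / 2) - AA)) by (apply Rmult_le_compat_l; lra).
      nra. }
    assert ((mu * S0 + lam * (AA + 2 * (K + 1))) / c k <= AA + 2 * K - 1).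
    { apply Rmult_le_reg_r with (c k); [lra|]. unfold Rdiv. rewrite Rmult_assoc, Rinv_l by lra. lra. }
    lra.
Qed.
End J.

Lemma recur : recurrent P.
Proof. intros i. unfold recurrent_state. apply (rec_j lam mu Hlam Hmu i (VV i)).
  - apply VV_nonneg.
  - apply VV_lyap. Qed.
End D.

Definition cont_within (T : R) (f : R -> R) (t : R) : Prop :=
  forall eps, 0 < eps -> exists delta, 0 < delta /\
    forall u, 0 <= u <= T -> Rabs (u - t) < delta -> Rabs (f u - f t) < eps.

Lemma derive_cont_within T f t l : is_derive f t l -> cont_within T f t.
Proof. intros H. apply is_derive_Reals in H.
  assert (Hd : derivable_pt f t) by (exists l; exact H).
  apply derivable_continuous_pt in Hd. intros eps Heps.
  destruct (Hd eps Heps) as [a [Ha Hb]]. exists a. split; [exact Ha|].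
  intros u _ Hu. destruct (Req_dec u t) as [->|Hne].
  - rewrite Rminus_diag, Rabs_R0. exact Heps.
  - apply (Hb u). split; [split; [exact I|auto]|exact Hu]. Qed.

Lemma cont_within_plus T f g t : cont_within T f t -> cont_within T g t -> cont_within T (fun s => f s + g s) t.
Proof. intros Hf Hg eps Heps. destruct (Hf (eps/2)) as [d1 [Hd1 H1]]; [lra|].
  destruct (Hg (eps/2)) as [d2 [Hd2 H2]]; [lra|]. exists (Rmin d1 d2). split; [apply Rmin_pos; lra|].
  intros u Hu Hut. assert (Rabs (u - t) < d1) by (eapply Rlt_le_trans; [exact Hut|apply Rmin_l]).
  assert (Rabs (u - t) < d2) by (eapply Rlt_le_trans; [exact Hut|apply Rmin_r]).
  specialize (H1 u Hu H). specialize (H2 u Hu H0).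
  replace (f u + g u - (f t + g t)) with ((f u - f t) + (g u - g t)) by ring.
  eapply Rle_lt_trans; [apply Rabs_triang|]. lra. Qed.

Lemma cont_within_ext T f g t : (forall s, f s = g s) -> cont_within T f t -> cont_within T g t.
Proof. intros He H eps Heps. destruct (H eps Heps) as [d [Hd H1]]. exists d. split; [exact Hd|].
  intros u Hu Hut. rewrite <- !He. apply H1; assumption. Qed.

Lemma cont_within_const T a t : cont_within T (fun _ => a) t.
Proof. intros eps Heps. exists 1. split; [lra|]. intros. rewrite Rminus_diag, Rabs_R0. exact Heps. Qed.

Lemma cont_within_psum T (f : nat -> R -> R) n t : (forall y, (y < n)%nat -> cont_within T (f y) t) ->
  cont_within T (fun s => psum (fun y => f y s) n) t.
Proof. induction n; intros H.
  - simpl. apply cont_within_const.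
  - simpl. apply cont_within_plus; [apply IHn; intros; apply H; lia|apply H; lia]. Qed.

Lemma is_derive_psum (f df : nat -> R -> R) n t : (forall y, (y < n)%nat -> is_derive (f y) t (df y t)) ->
  is_derive (fun s => psum (fun y => f y s) n) t (psum (fun y => df y t) n).
Proof. induction n; intros H.
  - simpl. apply (is_derive_const (V := R_NormedModule) 0 t).
  - simpl. apply (is_derive_plus (K := R_AbsRing) (V := R_NormedModule)); [apply IHn; intros; apply H; lia|apply H; lia]. Qed.

Lemma finite_delta (M : nat) (Pd : nat -> R -> Prop) :
  (forall x d d', (x <= M)%nat -> 0 < d' <= d -> Pd x d -> Pd x d') ->
  (forall x, (x <= M)%nat -> exists d, 0 < d /\ Pd x d) ->
  exists d, 0 < d /\ forall x, (x <= M)%nat -> Pd x d.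
Proof. intros Hm H. induction M.
  - destruct (H 0%nat (le_n 0)) as [d [Hd Hp]]. exists d. split; [exact Hd|].
    intros x Hx. assert (x = 0%nat) by lia. subst. exact Hp.
  - destruct IHM as [d1 [Hd1 H1]].
    + intros x d d' Hx. apply Hm. lia.
    + intros x Hx. apply H. lia.
    + destruct (H (S M) (le_n _)) as [d2 [Hd2 H2]].
      exists (Rmin d1 d2). split; [apply Rmin_pos; lra|]. intros x Hx.
      assert (0 < Rmin d1 d2) by (apply Rmin_pos; lra).
      destruct (Nat.eq_dec x (S M)) as [->|Hne].
      * apply Hm with d2; [lia| split; [lra|apply Rmin_r] | exact H2].
      * apply Hm with d1; [lia| split; [lra|apply Rmin_l] | apply H1; lia]. Qed.

Lemma barrier (M : nat) (T : R) (v v' : nat -> R -> R) :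
  0 <= T ->
  (forall x, (x <= M)%nat -> 0 < v x 0) ->
  (forall x t, (x <= M)%nat -> 0 <= t <= T -> cont_within T (v x) t) ->
  (forall x t, (x <= M)%nat -> 0 < t <= T -> is_derive (v x) t (v' x t)) ->
  (forall x t, (x <= M)%nat -> 0 < t <= T -> (forall l, (l <= M)%nat -> 0 <= v l t) -> v x t = 0 -> 0 < v' x t) ->
  forall x t, (x <= M)%nat -> 0 <= t <= T -> 0 < v x t.
Proof. intros HT H0 Hc Hd Hk x0 t0 Hx0 Ht0.
  apply NNPP. intros Hneg.
  set (E := fun s => 0 <= s <= T /\ forall u, 0 <= u <= s -> forall x, (x <= M)%nat -> 0 < v x u).
  assert (HE0 : E 0). { split; [lra|]. intros u Hu x Hx. replace u with 0 by lra. apply H0; exact Hx. }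
  assert (HEb : bound E). { exists T. intros s Hs. apply Hs. }
  destruct (completeness E HEb (ex_intro _ 0 HE0)) as [s Hs].
  destruct Hs as [Hub Hlub].
  assert (Hs0 : 0 <= s) by (apply Hub; exact HE0).
  assert (HsT : s <= T) by (apply Hlub; intros s' Hs'; apply Hs').
  assert (F1 : forall u, 0 <= u < s -> forall x, (x <= M)%nat -> 0 < v x u).
  { intros u Hu x Hx. apply NNPP. intros Hn.
    assert (s <= u). { apply Hlub. intros s' Hs'. destruct (Rle_dec s' u) as [Hl|Hl]; [exact Hl|].
      exfalso. apply Hn. apply (proj2 Hs' u); [lra|exact Hx]. } lra. }
  assert (F2 : forall x, (x <= M)%nat -> 0 <= v x s).
  { intros x Hx. destruct (Req_dec s 0) as [->|Hsn]; [apply Rlt_le, H0; exact Hx|].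
    apply Rnot_lt_le. intros Hlt.
    destruct (Hc x s Hx (conj Hs0 HsT) (- v x s)) as [d [Hdp Hdd]]; [lra|].
    set (u := Rmax 0 (s - d/2)).
    assert (Hu1 : 0 <= u) by apply Rmax_l.
    assert (Hu2 : u < s). { unfold u. apply Rmax_lub_lt; lra. }
    assert (Hu3 : Rabs (u - s) < d). { rewrite Rabs_left by lra. unfold u.
      assert (s - d/2 <= Rmax 0 (s - d/2)) by apply Rmax_r. lra. }
    assert (Hu4 : 0 <= u <= T) by lra. specialize (Hdd u Hu4 Hu3).
    specialize (F1 u (conj Hu1 Hu2) x Hx).
    apply Rabs_def2 in Hdd. lra. }
  destruct (classic (forall x, (x <= M)%nat -> 0 < v x s)) as [Hall|Hnall].
  -
    destruct (finite_delta M (fun x d => forall u, 0 <= u <= T -> Rabs (u - s) < d -> 0 < v x u)) as [d [Hd0 Hdd]].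
    + intros x d d' Hx Hd' Hp u Hu Hus. apply Hp; [exact Hu|lra].
    + intros x Hx. destruct (Hc x s Hx (conj Hs0 HsT) (v x s)) as [d [Hdp Hdd]]; [apply Hall; exact Hx|].
      exists d. split; [exact Hdp|]. intros u Hu Hus. specialize (Hdd u Hu Hus). apply Rabs_def2 in Hdd. lra.
    + set (s' := Rmin T (s + d/2)).
      assert (HE' : E s').
      { split; [split; [unfold s'; apply Rmin_glb; lra|apply Rmin_l]|].
        intros u Hu x Hx. destruct (Rlt_dec u s) as [Hl|Hl].
        - apply F1; [lra|exact Hx].
        - apply Hdd; [exact Hx| |].
          + split; [lra|]. assert (s' <= T) by apply Rmin_l. lra.
          + assert (s' <= s + d/2) by apply Rmin_r. rewrite Rabs_right by lra. lra. }
      destruct (Rlt_dec s T) as [HsT'|HsT'].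
      * assert (s' <= s) by (apply Hub; exact HE').
        assert (s < s') by (unfold s'; apply Rmin_glb_lt; lra). lra.
      * assert (s' = T). { unfold s'. apply Rmin_left. lra. }
        apply Hneg. apply (proj2 HE' t0); [rewrite H; lra|exact Hx0].
  -
    apply not_all_ex_not in Hnall. destruct Hnall as [x Hx]. apply imply_to_and in Hx. destruct Hx as [Hx Hnp].
    assert (Hz : v x s = 0) by (pose proof (F2 x Hx); lra).
    assert (Hspos : 0 < s). { destruct (Req_dec s 0) as [Hs|Hs]; [|lra]. rewrite Hs in Hz. pose proof (H0 x Hx). lra. }
    assert (Hv' : 0 < v' x s) by (apply Hk; [exact Hx|lra|exact F2|exact Hz]).
    pose proof (Hd x s Hx (conj Hspos HsT)) as Hder. apply is_derive_Reals in Hder.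
    destruct (Hder (v' x s / 2)) as [dl Hdl]; [lra|].
    set (h := - (Rmin dl s) / 2).
    assert (Hm : 0 < Rmin dl s) by (apply Rmin_pos; [apply cond_pos|lra]).
    assert (Hh : h <> 0) by (unfold h; lra).
    assert (Hh2 : Rabs h < dl). { unfold h. rewrite Rabs_left by lra. assert (Rmin dl s <= dl) by apply Rmin_l. lra. }
    specialize (Hdl h Hh Hh2).
    assert (Hpos : 0 < v x (s + h)). { apply F1; [|exact Hx]. unfold h. assert (Rmin dl s <= s) by apply Rmin_r. lra. }
    rewrite Hz in Hdl. apply Rabs_def2 in Hdl.
    assert ((v x (s + h) - 0) / h < 0). { unfold Rdiv. rewrite Rminus_0_r. apply Rmult_pos_neg; [lra|]. apply Rinv_lt_0_compat. unfold h; lra. }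
    lra.
Qed.

Section F.
Variables (lam mu : R) (Hlam : 0 < lam) (Hmu : 0 < mu).
Notation c := (crate lam mu).

Lemma is_derive_val (f : R -> R) (t a b : R) : is_derive f t a -> a = b -> is_derive f t b.
Proof. intros H ->. exact H. Qed.

Lemma compQ (M : nat) (T : R) (w w' : nat -> R -> R) :
  0 <= T ->
  (forall x, (x <= M)%nat -> 0 <= w x 0) ->
  (forall x t, (x <= M)%nat -> 0 <= t <= T -> cont_within T (w x) t) ->
  (forall x t, (x <= M)%nat -> 0 < t <= T -> is_derive (w x) t (w' x t)) ->
  (forall x t, (x <= M)%nat -> 0 < t <= T ->
      lam * w (S x) t + mu * psum (fun l => w l t) x - c x * w x t <= w' x t) ->
  (forall t, 0 < t <= T -> 0 <= w (S M) t \/ w (S M) t = w M t) ->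
  forall x t, (x <= M)%nat -> 0 <= t <= T -> 0 <= w x t.
Proof. intros HT H0 Hc Hd Hineq Hbd x t Hx Ht. apply Rnot_lt_le. intros Hlt.
  pose proof (exp_pos t) as Het.
  set (eps := - w x t / exp t).
  assert (Heps : 0 < eps) by (unfold eps; apply Rdiv_lt_0_compat; lra).
  assert (Hder : forall s, is_derive (fun s => eps * exp s) s (eps * exp s)).
  { intros s. apply is_derive_scal. apply is_derive_exp. }
  assert (Hb := barrier M T (fun y s => w y s + eps * exp s) (fun y s => w' y s + eps * exp s) HT).
  assert (Hfin : 0 < w x t + eps * exp t).
  { apply Hb; [| | | |exact Hx|exact Ht].
    - intros y Hy. rewrite exp_0. pose proof (H0 y Hy). lra.
    - intros y s Hy Hs. apply cont_within_plus; [apply Hc; assumption|]. eapply derive_cont_within. apply Hder.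
    - intros y s Hy Hs. apply (is_derive_plus (K := R_AbsRing) (V := R_NormedModule)); [apply Hd; assumption|apply Hder].
    - intros y s Hy Hs Hpos Hz. pose proof (exp_pos s) as Hes. set (E := eps * exp s) in *.
      assert (HE : 0 < E) by (unfold E; nra).
      assert (Hwl : forall l, (l <= M)%nat -> - E <= w l s) by (intros l Hl; specialize (Hpos l Hl); lra).
      assert (HwS : - E <= w (S y) s).
      { destruct (le_lt_dec (S y) M) as [HS|HS]; [apply Hwl; exact HS|].
        assert (y = M) by lia. subst y. destruct (Hbd s Hs) as [Hb1|Hb1]; [lra|rewrite Hb1; apply Hwl; lia]. }
      assert (Hps : psum (fun l => - E) y <= psum (fun l => w l s) y).
      { apply psum_le. intros l Hl. apply Hwl. lia. }
      rewrite psum_const in Hps.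
      specialize (Hineq y s Hy Hs). assert (Hwy : w y s = - E) by lra. rewrite Hwy in Hineq.
      unfold crate in Hineq. pose proof (pos_INR y).
      assert (lam * w (S y) s >= lam * - E) by (apply Rle_ge, Rmult_le_compat_l; lra).
      assert (mu * psum (fun l => w l s) y >= mu * (INR y * - E)) by (apply Rle_ge, Rmult_le_compat_l; lra).
      nra. }
  unfold eps in Hfin. field_simplify in Hfin; [|lra]. lra. Qed.

Definition Ucol (p : R -> nat -> nat -> R) N t x := psum (fun y => p t x y) (S N).

Lemma psum_ind x n : psum (fun z => if (x =? z)%nat then 1 else 0) n = if (x <? n)%nat then 1 else 0.
Proof. induction n; simpl psum; [destruct (Nat.ltb_spec x 0); [lia|reflexivity]|]. rewrite IHn.
  destruct (Nat.eqb_spec x n) as [->|Hne].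
  - destruct (Nat.ltb_spec n n); [lia|]. destruct (Nat.ltb_spec n (S n)); [ring|lia].
  - destruct (Nat.ltb_spec x n); destruct (Nat.ltb_spec x (S n)); try lia; ring. Qed.

Lemma U_deriv p : backward_solution (qmat lam mu) p -> forall N x t, 0 < t ->
  is_derive (fun s => Ucol p N s x) t (lam * Ucol p N t (S x) + mu * psum (fun l => Ucol p N t l) x - c x * Ucol p N t x).
Proof. intros [_ [_ [_ Hd]]] N x t Ht. unfold Ucol.
  eapply is_derive_val.
  - apply (is_derive_psum (fun y s => p s x y) (fun y t => Series (fun z => qmat lam mu x z * p t z y))).
    intros y _. apply Hd. exact Ht.
  - rewrite (psum_ext _ (fun y => lam * p t (S x) y + mu * psum (fun l => p t l y) x - c x * p t x y))
      by (intros y _; exact (q_row lam mu x (fun z => p t z y))).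
    rewrite psum_minus, psum_plus, !psum_scal. f_equal. f_equal. f_equal.
    rewrite (psum_swap (fun y l => p t l y)). reflexivity. Qed.

Lemma U_cont p : backward_solution (qmat lam mu) p -> forall N x T t, 0 <= t <= T -> cont_within T (fun s => Ucol p N s x) t.
Proof. intros [_ [_ [Hc Hd]]] N x T t Ht. unfold Ucol. apply cont_within_psum. intros y _.
  destruct (Req_dec t 0) as [->|Hne].
  - intros eps Heps. destruct (Hc x y eps Heps) as [d [Hd0 Hdd]]. exists d. split; [exact Hd0|].
    intros u Hu Hud. apply Hdd. rewrite Rminus_0_r in Hud. apply Rabs_def2 in Hud. lra.
  - eapply derive_cont_within. apply (Hd t x y). lra. Qed.

Lemma U_nonneg p : backward_solution (qmat lam mu) p -> forall N x t, 0 <= t -> 0 <= Ucol p N t x.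
Proof. intros [Hn _] N x t Ht. apply psum_nonneg. intros. apply Hn. exact Ht. Qed.

Lemma U_init p : backward_solution (qmat lam mu) p -> forall N x, (x <= N)%nat -> Ucol p N 0 x = 1.
Proof. intros [_ [Hi _]] N x Hx. unfold Ucol. rewrite (psum_ext _ (fun z => if (x =? z)%nat then 1 else 0)) by (intros; apply Hi).
  rewrite psum_ind. destruct (Nat.ltb_spec x (S N)); [reflexivity|lia]. Qed.

Lemma psum_pow2 y : psum (fun l => 2 ^ l) y = 2 ^ y - 1.
Proof. induction y; simpl psum; [simpl; ring|]. rewrite IHy. simpl. ring. Qed.

Lemma lower_bound p : backward_solution (qmat lam mu) p -> forall N x t, (x <= N)%nat -> 0 <= t ->
  1 - exp (lam * t) * 2 ^ x / 2 ^ (S N) <= Ucol p N t x.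
Proof. intros Hb N x t Hx Ht.
  set (dl := / 2 ^ (S N)).
  assert (Hdl : 0 < dl) by (unfold dl; apply Rinv_0_lt_compat, pow_lt; lra).
  set (w := fun y s => Ucol p N s y + (exp (lam * s) * (2 ^ y * dl) - 1)).
  set (w' := fun y s => (lam * Ucol p N s (S y) + mu * psum (fun l => Ucol p N s l) y - c y * Ucol p N s y)
                        + lam * exp (lam * s) * (2 ^ y * dl)).
  assert (Hed : forall y s, is_derive (fun s => exp (lam * s) * (2 ^ y * dl) - 1) s (lam * exp (lam * s) * (2 ^ y * dl))).
  { intros y s. auto_derive; [exact I|ring]. }
  assert (H := compQ N t w w' Ht).
  assert (Hw : 0 <= w x t).
  { apply H; [| | | | |exact Hx|lra].
    - intros y Hy. unfold w. rewrite U_init by assumption. rewrite Rmult_0_r, exp_0.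
      assert (0 < 2 ^ y) by (apply pow_lt; lra). nra.
    - intros y s Hy Hs. apply cont_within_plus; [apply U_cont; assumption|]. eapply derive_cont_within. apply Hed.
    - intros y s Hy Hs. unfold w, w'. apply (is_derive_plus (K := R_AbsRing) (V := R_NormedModule)); [apply U_deriv; [assumption|lra]|apply Hed].
    - intros y s Hy Hs. unfold w, w'. rewrite psum_plus, psum_minus, psum_const.
      rewrite (psum_ext (fun l => exp (lam * s) * (2 ^ l * dl)) (fun l => exp (lam * s) * dl * 2 ^ l)) by (intros; ring).
      rewrite psum_scal, psum_pow2. unfold crate.
      pose proof (exp_pos (lam * s)) as He. set (E := exp (lam * s)) in *.
      assert (Hk : (1 - INR y) * 2 ^ y <= 1).
      { destruct y; [simpl; lra|]. rewrite S_INR. pose proof (pos_INR y). assert (0 < 2 ^ S y) by (apply pow_lt; lra). nra. }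
      simpl pow at 1.
      assert (E * dl * (mu * ((1 - INR y) * 2 ^ y)) <= E * dl * mu). { assert (0 < E * dl) by (apply Rmult_lt_0_compat; lra). apply Rmult_le_compat_l; [lra|]. nra. }
      change (psum (Ucol p N s) y) with (psum (fun l => Ucol p N s l) y). nra.
    - intros s Hs. left. unfold w. pose proof (U_nonneg p Hb N (S N) s ltac:(lra)).
      unfold dl. rewrite Rinv_r by (apply pow_nonzero; lra). rewrite Rmult_1_r.
      assert (1 <= exp (lam * s)). { rewrite <- exp_0. left. apply exp_increasing. nra. } lra. }
  unfold w in Hw. unfold dl in Hw. unfold Rdiv. lra. Qed.

End F.

Lemma ex_series_psum (g : nat -> nat -> R) m : (forall k, (k < m)%nat -> ex_series (g k)) ->
  ex_series (fun n => psum (fun k => g k n) m).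
Proof. induction m; intros H.
  - simpl. apply ex_series_fin with (n := 0%nat). reflexivity.
  - simpl. apply (ex_series_plus (K := R_AbsRing) (V := R_NormedModule)); [apply IHm; intros; apply H; lia|apply H; lia]. Qed.

Lemma Series_psum (g : nat -> nat -> R) m : (forall k, (k < m)%nat -> ex_series (g k)) ->
  Series (fun n => psum (fun k => g k n) m) = psum (fun k => Series (g k)) m.
Proof. induction m; intros H.
  - simpl. rewrite (Series_fin _ 0) by reflexivity. reflexivity.
  - simpl. rewrite Series_plus; [| apply ex_series_psum; intros; apply H; lia| apply H; lia].
    rewrite IHm by (intros; apply H; lia). reflexivity. Qed.

Lemma Series_nonneg a : ex_series a -> (forall n, 0 <= a n) -> 0 <= Series a.
Proof. intros He H. assert (H0 : Series (fun _ : nat => 0) = 0) by (rewrite (Series_fin _ 0); reflexivity).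
  eapply Rle_trans; [right; symmetry; exact H0|]. apply Series_le; [|exact He].
  intros; split; [lra|apply H]. Qed.

Lemma pow_bound_fact r n : 0 <= r -> r ^ n / INR (fact n) <= exp r.
Proof. intros Hr. eapply Rle_trans; [|apply (exp_ge_taylor r n Hr)].
  rewrite <- sum_n_Reals, sum_n_psum. apply psum_ge_term with (f := fun k => r ^ k / INR (fact k)); [|lia].
  intros. apply Rdiv_le_0_compat; [apply pow_le; lra|apply INR_fact_lt_0]. Qed.

Lemma CV_inf (a : nat -> R) R0 : 0 <= R0 -> (forall n, Rabs (a n) <= R0 ^ n / INR (fact n)) ->
  forall t, Rbar_lt (Rabs t) (CV_radius a).
Proof. intros HR H t. set (r := Rabs t + 1).
  assert (Hr : Rbar_le r (CV_radius a)).
  { destruct (CV_radius_bounded a) as [Hub _]. apply Hub. exists (exp (R0 * r)). intros n.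
    assert (0 <= r) by (unfold r; pose proof (Rabs_pos t); lra).
    rewrite Rabs_mult, (Rabs_right (r ^ n)) by (apply Rle_ge, pow_le; lra).
    eapply Rle_trans; [apply Rmult_le_compat_r; [apply pow_le; lra|apply H]|].
    rewrite <- (pow_bound_fact (R0 * r) n) by nra. rewrite Rpow_mult_distr. right. unfold Rdiv. ring. }
  eapply Rbar_lt_le_trans; [|exact Hr]. simpl. unfold r. lra. Qed.

Section G.
Variables (lam mu : R) (Hlam : 0 < lam) (Hmu : 0 < mu).
Notation c := (crate lam mu).
Variable y : nat.

Definition Ky := lam + INR (S y) * mu.
Definition Aly (i k : nat) : R :=
  if (i <=? y)%nat then (if (k =? S i)%nat then lam else if (k <? i)%nat then mu else if (k =? i)%nat then - c i else 0)
  else (if (k <=? y)%nat then mu else - (INR (S y) * mu)).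
Definition Bm (i k : nat) : R := Aly i k + (if (i =? k)%nat then Ky else 0).

Lemma Bm_bounds i k : (i <= S y)%nat -> (k <= S y)%nat -> 0 <= Bm i k <= Ky.
Proof. intros Hi Hk. unfold Bm, Aly, Ky, crate. pose proof (pos_INR y). pose proof (pos_INR i). rewrite !S_INR in *.
  destruct (Nat.leb_spec i y).
  - assert (INR i <= INR y) by (apply le_INR; lia).
    destruct (Nat.eqb_spec k (S i)); [destruct (Nat.eqb_spec i k); [lia|]; split; nra|].
    destruct (Nat.ltb_spec k i); [destruct (Nat.eqb_spec i k); [lia|]; split; nra|].
    destruct (Nat.eqb_spec k i); [subst; rewrite Nat.eqb_refl; split; nra|].
    destruct (Nat.eqb_spec i k); [lia|]. split; nra.
  - assert (i = S y) by lia. subst i.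
    destruct (Nat.leb_spec k y); [destruct (Nat.eqb_spec (S y) k); [lia|]; split; nra|].
    assert (k = S y) by lia. subst. rewrite Nat.eqb_refl. split; nra. Qed.

Fixpoint mp (n i : nat) : R :=
  match n with O => if (i =? y)%nat then 1 else 0 | S n => psum (fun k => Bm i k * mp n k) (S (S y)) end.

Definition RR := INR (S (S y)) * Ky.

Lemma Ky_pos : 0 < Ky.
Proof. unfold Ky. pose proof (pos_INR (S y)). nra. Qed.

Lemma mp_bounds n i : (i <= S y)%nat -> 0 <= mp n i <= RR ^ n.
Proof. revert i. induction n; intros i Hi.
  - simpl. destruct (i =? y)%nat; lra.
  - change (mp (S n) i) with (psum (fun k => Bm i k * mp n k) (S (S y))). split.
    + apply psum_nonneg. intros k Hk. apply Rmult_le_pos; [apply Bm_bounds; lia|apply IHn; lia].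
    + eapply Rle_trans; [apply (psum_le _ (fun _ => Ky * RR ^ n))|].
      * intros k Hk. pose proof (Bm_bounds i k Hi ltac:(lia)). pose proof (IHn k ltac:(lia)).
        apply Rmult_le_compat; lra.
      * rewrite psum_const. change (RR ^ S n) with (RR * RR ^ n). unfold RR. right. ring. Qed.

Definition aa (i n : nat) := mp n i / INR (fact n).

Lemma RR_nonneg : 0 <= RR.
Proof. unfold RR. pose proof Ky_pos. pose proof (pos_INR (S (S y))). nra. Qed.

Lemma aa_CV i : (i <= S y)%nat -> forall t, Rbar_lt (Rabs t) (CV_radius (aa i)).
Proof. intros Hi. apply CV_inf with RR; [apply RR_nonneg|]. intros n. unfold aa.
  pose proof (mp_bounds n i Hi). pose proof (INR_fact_lt_0 n).
  rewrite Rabs_right by (apply Rle_ge, Rdiv_le_0_compat; lra). unfold Rdiv. apply Rmult_le_compat_r; [left; apply Rinv_0_lt_compat; lra|lra]. Qed.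

Lemma aa_ex i t : (i <= S y)%nat -> ex_series (fun n => aa i n * t ^ n).
Proof. intros Hi. apply ex_pseries_R. apply CV_radius_inside. apply aa_CV. exact Hi. Qed.

Definition SS i t := PSeries (aa i) t.

Lemma SS_nonneg i t : (i <= S y)%nat -> 0 <= t -> 0 <= SS i t.
Proof. intros Hi Ht. unfold SS, PSeries. apply Series_nonneg; [apply aa_ex; exact Hi|].
  intros n. unfold aa. apply Rmult_le_pos; [|apply pow_le; exact Ht].
  apply Rdiv_le_0_compat; [apply mp_bounds; exact Hi|apply INR_fact_lt_0]. Qed.

Lemma SS_deriv i t : (i <= S y)%nat -> is_derive (SS i) t (psum (fun k => Bm i k * SS k t) (S (S y))).
Proof. intros Hi. unfold SS. eapply is_derive_val; [apply is_derive_PSeries; apply aa_CV; exact Hi|].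
  rewrite (psum_ext (fun k => Bm i k * SS k t) (fun k => Series (fun n => Bm i k * (aa k n * t ^ n))))
    by (intros; unfold SS, PSeries; rewrite Series_scal_l; reflexivity).
  unfold PSeries. rewrite <- Series_psum.
  2:{ intros k Hk. apply (ex_series_scal_l (K := R_AbsRing) (V := R_NormedModule) (Bm i k)). apply aa_ex. lia. }
  apply Series_ext. intros n. unfold PS_derive, aa.
  change (mp (S n) i) with (psum (fun k => Bm i k * mp n k) (S (S y))).
  rewrite fact_simpl, mult_INR. idtac.
  rewrite (psum_ext (fun k => Bm i k * (mp n k / INR (fact n) * t ^ n)) (fun k => / INR (fact n) * t ^ n * (Bm i k * mp n k)))
    by (intros; unfold Rdiv; ring).
  rewrite psum_scal. pose proof (INR_fact_lt_0 n). pose proof (pos_INR n). rewrite S_INR. field. split; lra. Qed.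


Lemma psum_delta k (f : nat -> R) n : psum (fun j => if (k =? j)%nat then f j else 0) n = if (k <? n)%nat then f k else 0.
Proof. induction n; simpl psum; [destruct (Nat.ltb_spec k 0); [lia|reflexivity]|]. rewrite IHn.
  destruct (Nat.eqb_spec k n) as [->|Hne].
  - destruct (Nat.ltb_spec n n); [lia|]. destruct (Nat.ltb_spec n (S n)); [ring|lia].
  - destruct (Nat.ltb_spec k n); destruct (Nat.ltb_spec k (S n)); try lia; ring. Qed.

Definition vv k t := exp (- Ky * t) * SS k t.

Lemma vv_deriv k t : (k <= S y)%nat -> is_derive (vv k) t (psum (fun j => Aly k j * vv j t) (S (S y))).
Proof. intros Hk. unfold vv.
  assert (He : is_derive (fun t => exp (- Ky * t)) t (- Ky * exp (- Ky * t))) by (auto_derive; [exact I|ring]).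
  eapply is_derive_val.
  - apply (is_derive_mult (K := R_AbsRing)); [exact He|apply SS_deriv; exact Hk|intros; apply Rmult_comm].
  - unfold Bm. rewrite (psum_ext _ (fun j => Aly k j * SS j t + (if (k =? j)%nat then Ky * SS j t else 0)))
      by (intros; destruct (k =? _)%nat; ring).
    rewrite psum_plus, psum_delta. destruct (Nat.ltb_spec k (S (S y))); [|lia].
    rewrite (psum_ext (fun j => Aly k j * (exp (- Ky * t) * SS j t)) (fun j => exp (- Ky * t) * (Aly k j * SS j t))) by (intros; ring).
    rewrite psum_scal. unfold plus, mult; simpl. ring. Qed.

Lemma Aly_row_low x (v : nat -> R) : (x <= y)%nat ->
  psum (fun k => Aly x k * v k) (S (S y)) = lam * v (S x) + mu * psum v x - c x * v x.
Proof. intros Hx. rewrite (psum_stable _ (S (S x))).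
  - rewrite psum_split. unfold Aly. destruct (Nat.leb_spec x y); [|lia].
    rewrite Nat.eqb_refl. destruct (Nat.eqb_spec x (S x)); [lia|]. destruct (Nat.ltb_spec x x); [lia|].
    rewrite Nat.eqb_refl.
    rewrite (psum_ext _ (fun k => mu * v k)).
    + rewrite psum_scal. ring.
    + intros l Hl. destruct (Nat.leb_spec x y); [|lia]. destruct (Nat.eqb_spec l (S x)); [lia|].
      destruct (Nat.ltb_spec l x); [reflexivity|lia].
  - intros l Hl. unfold Aly. destruct (Nat.leb_spec x y); [|lia]. destruct (Nat.eqb_spec l (S x)); [lia|].
    destruct (Nat.ltb_spec l x); [lia|]. destruct (Nat.eqb_spec l x); [lia|]. ring.
  - lia. Qed.

Lemma Aly_row_top (v : nat -> R) :
  psum (fun k => Aly (S y) k * v k) (S (S y)) = mu * psum v (S y) - INR (S y) * mu * v (S y).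
Proof. change (psum (fun k => Aly (S y) k * v k) (S (S y))) with (psum (fun k => Aly (S y) k * v k) (S y) + Aly (S y) (S y) * v (S y)).
  rewrite (psum_ext _ (fun k => mu * v k)).
  - rewrite psum_scal. unfold Aly. destruct (Nat.leb_spec (S y) y); [lia|]. ring.
  - intros l Hl. unfold Aly. destruct (Nat.leb_spec (S y) y); [lia|]. destruct (Nat.leb_spec l y); [reflexivity|lia]. Qed.

Lemma psum_min (v : nat -> R) x : (S y <= x)%nat ->
  psum (fun l => v (Nat.min l (S y))) x = psum v (S y) + INR (x - S y) * v (S y).
Proof. intros H. induction H.
  - rewrite Nat.sub_diag. simpl INR. rewrite Rmult_0_l, Rplus_0_r. apply psum_ext. intros. rewrite Nat.min_l by lia. reflexivity.
  - simpl psum. rewrite IHle. rewrite Nat.min_r by lia. replace (S m - S y)%nat with (S (m - S y)) by lia. rewrite S_INR. change (psum v (S y)) with (psum v y + v y). ring. Qed.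

Definition pcol t x := vv (Nat.min x (S y)) t.

Lemma pcol_eq x t : Series (fun z => qmat lam mu x z * pcol t z) = psum (fun j => Aly (Nat.min x (S y)) j * vv j t) (S (S y)).
Proof. rewrite q_row. unfold pcol. destruct (le_lt_dec x y) as [Hx|Hx].
  - rewrite !Nat.min_l by lia. rewrite Aly_row_low by exact Hx.
    rewrite (psum_ext _ (fun l => vv l t)) by (intros; rewrite Nat.min_l by lia; reflexivity). reflexivity.
  - rewrite !Nat.min_r by lia. rewrite Aly_row_top.
    rewrite (psum_min (fun l => vv l t)) by lia. unfold crate. rewrite minus_INR by lia. ring. Qed.

Lemma pcol_deriv x t : is_derive (fun s => pcol s x) t (Series (fun z => qmat lam mu x z * pcol t z)).
Proof. rewrite pcol_eq. unfold pcol. apply vv_deriv. lia. Qed.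

Lemma pcol_nonneg x t : 0 <= t -> 0 <= pcol t x.
Proof. intros Ht. unfold pcol, vv. apply Rmult_le_pos; [apply Rlt_le, exp_pos|apply SS_nonneg; [lia|exact Ht]]. Qed.

Lemma pcol_init x : pcol 0 x = if (x =? y)%nat then 1 else 0.
Proof. unfold pcol, vv, SS. rewrite Rmult_0_r, exp_0, Rmult_1_l, PSeries_0. unfold aa. simpl mp. simpl fact. rewrite Rdiv_1_r.
  destruct (Nat.eqb_spec x y) as [->|Hne].
  - rewrite Nat.min_l by lia. rewrite Nat.eqb_refl. reflexivity.
  - destruct (Nat.eqb_spec (Nat.min x (S y)) y); [|reflexivity]. exfalso. apply Hne. lia. Qed.

End G.

Section H.
Variables (lam mu : R) (Hlam : 0 < lam) (Hmu : 0 < mu).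

Definition pex t x y := pcol lam mu y t x.

Lemma pex_sol : backward_solution (qmat lam mu) pex.
Proof. split; [|split; [|split]].
  - intros t x y Ht. apply pcol_nonneg; assumption.
  - intros x y. apply pcol_init; assumption.
  - intros x y eps Heps.
    assert (Hc : cont_within 1 (fun s => pex s x y) 0).
    { eapply derive_cont_within. apply pcol_deriv; assumption. }
    destruct (Hc eps Heps) as [d [Hd Hdd]]. exists (Rmin d 1). split; [apply Rmin_pos; lra|].
    intros s Hs. apply Hdd.
    + assert (Rmin d 1 <= 1) by apply Rmin_r. lra.
    + rewrite Rminus_0_r, Rabs_right by lra. assert (Rmin d 1 <= d) by apply Rmin_l. lra.
  - intros t x y Ht. split; [apply q_row_ex|]. apply pcol_deriv; assumption. Qed.

Lemma pex_far N s x : (S N <= x)%nat -> Ucol pex N s x = Ucol pex N s (S N).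
Proof. intros H. unfold Ucol, pex, pcol. apply psum_ext. intros y Hy. rewrite !Nat.min_r by lia. reflexivity. Qed.

Lemma upper_bound N x t : 0 <= t -> Ucol pex N t x <= 1.
Proof. intros Ht.
  assert (Hmain : forall x, (x <= S N)%nat -> 0 <= 1 - Ucol pex N t x).
  { intros x0 Hx0.
    apply (compQ lam mu Hlam Hmu (S N) t (fun y s => 1 - Ucol pex N s y)
      (fun y s => - (lam * Ucol pex N s (S y) + mu * psum (fun l => Ucol pex N s l) y - crate lam mu y * Ucol pex N s y)) Ht);
      [| | | | |exact Hx0|lra].
    - intros y Hy. unfold Ucol. rewrite (psum_ext _ (fun z => if (y =? z)%nat then 1 else 0)) by (intros; apply pcol_init; assumption).
      rewrite psum_ind. destruct (y <? S N)%nat; lra.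
    - intros y s Hy Hs. apply (cont_within_ext t (fun s => 1 + (-1) * Ucol pex N s y)); [intros; ring|].
      apply cont_within_plus; [apply cont_within_const|].
      intros eps Heps. destruct (U_cont lam mu pex pex_sol N y t s Hs eps Heps) as [d [Hd Hdd]].
      exists d. split; [exact Hd|]. intros u Hu Hus. specialize (Hdd u Hu Hus).
      replace (-1 * Ucol pex N u y - -1 * Ucol pex N s y) with (- (Ucol pex N u y - Ucol pex N s y)) by ring.
      rewrite Rabs_Ropp. exact Hdd.
    - intros y s Hy Hs. apply (is_derive_val (fun s => 1 - Ucol pex N s y) s (0 - (lam * Ucol pex N s (S y) + mu * psum (fun l => Ucol pex N s l) y - crate lam mu y * Ucol pex N s y))); [|ring].
      apply (is_derive_minus (K := R_AbsRing) (V := R_NormedModule) (fun _ => 1)); [apply (is_derive_const (V := R_NormedModule))|].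
      apply U_deriv; [exact pex_sol|lra].
    - intros y s Hy Hs. rewrite psum_minus, psum_const. unfold crate. right. change (psum (Ucol pex N s) y) with (psum (fun l => Ucol pex N s l) y). ring.
    - intros s Hs. right. rewrite pex_far by lia. reflexivity. }
  destruct (le_lt_dec x (S N)) as [Hx|Hx].
  - pose proof (Hmain x Hx). lra.
  - rewrite pex_far by lia. pose proof (Hmain (S N) (le_n _)). lra. Qed.

Lemma pow2_ge n : INR n <= 2 ^ n.
Proof. induction n; [simpl; lra|]. rewrite S_INR. simpl pow. assert (1 <= 2 ^ n) by (apply pow_R1_Rle; lra). lra. Qed.

Lemma stoch p : minimal_backward_solution (qmat lam mu) p -> forall t x, 0 <= t -> is_series (fun y => p t x y) 1.
Proof. intros [Hb Hmin] t x Ht. apply is_series_Reals. intros eps Heps.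
  set (C := exp (lam * t) * 2 ^ x).
  assert (HC : 0 < C) by (unfold C; apply Rmult_lt_0_compat; [apply exp_pos|apply pow_lt; lra]).
  destruct (INR_unbounded (C / eps)) as [N0 HN0]. exists (max N0 x). intros n Hn.
  rewrite <- sum_n_Reals, sum_n_psum. fold (Ucol p n t x).
  assert (Hup : Ucol p n t x <= 1).
  { eapply Rle_trans; [|apply (upper_bound n x t Ht)]. unfold Ucol. apply psum_le. intros. apply Hmin; [exact pex_sol|exact Ht]. }
  assert (Hlow := lower_bound lam mu Hlam Hmu p Hb n x t ltac:(lia) Ht). fold C in Hlow.
  assert (H2 : INR (S n) <= 2 ^ S n) by apply pow2_ge.
  assert (H3 : INR N0 <= INR n) by (apply le_INR; lia). rewrite S_INR in H2.
  assert (Hp : 0 < 2 ^ S n) by (apply pow_lt; lra).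
  assert (C / 2 ^ S n < eps).
  { apply Rmult_lt_reg_r with (2 ^ S n); [exact Hp|]. unfold Rdiv. rewrite Rmult_assoc, Rinv_l by lra.
    assert (C < eps * INR N0 + eps).
    { apply Rmult_lt_reg_r with (/ eps); [apply Rinv_0_lt_compat; lra|].
      replace ((eps * INR N0 + eps) * / eps) with (INR N0 + 1) by (field; lra). unfold Rdiv in HN0. lra. }
    nra. }
  unfold R_dist. rewrite Rabs_left1 by lra. unfold Rdiv in *. lra. Qed.

End H.

Theorem mainTheorem1 (lam mu : R) (Hlam : 0 < lam) (Hmu : 0 < mu) :
  irreducible (jump_matrix (qmat lam mu) (crate lam mu)) /\
  recurrent (jump_matrix (qmat lam mu) (crate lam mu)) /\
  (forall p : R -> nat -> nat -> R,
     minimal_backward_solution (qmat lam mu) p ->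
     forall (t : R) (x : nat), 0 <= t -> is_series (fun y => p t x y) 1).
Proof.
  split; [exact (irred lam mu Hlam Hmu)|]. split; [exact (recur lam mu Hlam Hmu)|].
  intros p Hp t x Ht. exact (stoch lam mu Hlam Hmu p Hp t x Ht).
Qed.
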